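(* Let $p$ be an odd prime and let $R$ be a local nearring whose additive group $R^+$ is isomorphic to the non-abelian group of order $p^3$ and exponent $p$. Then the commutator subgroup $D(R^+)$ of $R^+$ is an ideal of $R$.
   Context: A (left) nearring is a set $R$ with operations $+,\cdot$ such that $(R,+)$ is a group, $(R,\cdot)$ a semigroup, and $x(y+z)=xy+xz$ for all $x,y,z$. A nearring with identity is local if its non-invertible elements form a subgroup of $(R,+)$. An ideal of $R$ is a normal subgroup $I$ of $(R,+)$ such that $xI\subseteq I$ for all $x\in R$ and $(z+x)y-xy\in I$ for all $x,y\in R$, $z\in I$. For the group in question, $D(R^+)$ coincides with the center of $R^+$ and has order $p$. *)

(* Defs.v *)
(* A (left) nearring is modelled on a finite group gT, which
   is the additive group (R,+), written multiplicatively as in fingroup: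
   the group law * is "+", 1 is "0", x^-1 is "-x". *)
From HB Require Import structures.
From mathcomp Require Import all_boot all_fingroup all_solvable.
Set Implicit Arguments. Unset Strict Implicit. Unset Printing Implicit Defensive.
Local Open Scope group_scope.

Definition nearring (gT : finGroupType) (mul : gT -> gT -> gT) : Prop :=
  associative mul /\ (forall x y z : gT, mul x (y * z) = mul x y * mul x z).

Definition nr_identity (gT : finGroupType) (mul : gT -> gT -> gT) (e : gT) : Prop :=
  forall x : gT, mul e x = x /\ mul x e = x.

Definition nr_unit (gT : finGroupType) (mul : gT -> gT -> gT) (e x : gT) : bool :=
  [exists y : gT, (mul x y == e) && (mul y x == e)].

Definition local_nearring (gT : finGroupType) (mul : gT -> gT -> gT) : Prop :=
  nearring mul /\
  exists e : gT, nr_identity mul e /\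
    group_set [set x : gT | ~~ nr_unit mul e x].

Definition nr_ideal (gT : finGroupType) (mul : gT -> gT -> gT) (I : {set gT}) : Prop :=
  [/\ group_set I, I <| [set: gT],
      (forall x z : gT, z \in I -> mul x z \in I) &
      (forall x y z : gT, z \in I -> mul (z * x) y * (mul x y)^-1 \in I)].

(* Main.v *)
Require Import Defs.
From HB Require Import structures.
From mathcomp Require Import all_boot all_fingroup all_solvable.
Local Open Scope group_scope.
Set Implicit Arguments. Unset Strict Implicit.

Section NR.
Variables (p : nat) (gT : finGroupType) (mul : gT -> gT -> gT) (e : gT).
Hypothesis pr : prime p.
Hypothesis massoc : associative mul.
Hypothesis mdistr : forall x y z, mul x (y * z) = mul x y * mul x z.
Hypothesis mide : nr_identity mul e.
Hypothesis cardG : #|[set: gT]| = (p ^ 3)%N.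
Hypothesis nab : ~~ abelian [set: gT].
Hypothesis expG : exponent [set: gT] = p.

Definition lam x : {morphism [set: gT] >-> gT} :=
  @Morphism _ _ [set: gT] (mul x) (in2W (mdistr x)).

Lemma lamE x y : lam x y = mul x y. Proof. by []. Qed.

Lemma mul1g_ x : mul x 1 = 1.
Proof. by rewrite -lamE morph1. Qed.
Lemma mulV_ x y : mul x y^-1 = (mul x y)^-1.
Proof. by rewrite -!lamE morphV ?inE. Qed.
Lemma mulX_ x y n : mul x (y ^+ n) = (mul x y) ^+ n.
Proof. by rewrite -!lamE morphX ?inE. Qed.
Lemma mulR_ x y z : mul x [~ y, z] = [~ mul x y, mul x z].
Proof. by rewrite -!lamE morphR ?inE. Qed.

Definition D := [~: [set: gT], [set: gT]].
Canonical DG := Eval hnf in [group of D].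

Lemma mulD x z : z \in D -> mul x z \in D.
Proof.
move=> zD.
have : lam x z \in lam x @* D by apply: mem_morphim; rewrite ?inE.
rewrite morphimR ?subsetT // => /subsetP; apply.
by apply: commgSS; apply: subsetT.
Qed.

Lemma pG : p.-group [set: gT].
Proof. by rewrite /pgroup cardG pnatX pnat_id. Qed.

Lemma esG : extraspecial [set: gT].
Proof.
apply: p3group_extraspecial pG nab _.
by rewrite cardG pfactorK.
Qed.

Lemma DZ : D = 'Z([set: gT]).
Proof. by have [[_ <-] _] := esG; rewrite derg1. Qed.

Lemma cardD : #|D| = p.
Proof.
have [_] := esG; rewrite -DZ => prD.
have : #|D| %| p ^ 3 by rewrite -cardG cardSg ?subsetT.
move=> h.
rewrite (Euclid_dvdX p 3 prD) andbT dvdn_prime2 // in h.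
by apply/eqP.
Qed.


Lemma Dcent (d g : gT) : d \in D -> commute d g.
Proof.
rewrite DZ => /centerP [_ h]; exact: h (in_setT g).
Qed.

Lemma notD (g : gT) : g \notin D -> exists h, [~ g, h] != 1.
Proof.
move=> gD; apply/existsP; apply: contraR gD; rewrite negb_exists => /forallP h.
rewrite DZ; apply/centerP; split; first by rewrite inE.
by move=> y _; apply/commgP; have := h y; rewrite negbK.
Qed.

Lemma expp (g : gT) : g ^+ p = 1.
Proof. by rewrite -expG expg_exponent ?inE. Qed.

Lemma order_p (g : gT) : g != 1 -> #[g] = p.
Proof.
move=> g1; have : #[g] %| p by rewrite order_dvdn expp.
case/primeP: pr => _ h /h /orP [|/eqP //].
by rewrite order_eq1 (negbTE g1).
Qed.

Lemma Dcyc (d : gT) : d \in D -> d != 1 -> D = <[d]>.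
Proof.
move=> dD d1; apply/eqP; rewrite eq_sym eqEcard cycle_subG dD /=.
by rewrite cardD -orderE order_p.
Qed.

Lemma between (A H B : {group gT}) :
  A \subset H -> H \subset B -> #|B| = (p * #|A|)%N -> H :=: A \/ H :=: B.
Proof.
move=> sAH sHB oB.
have iBA : #|B : A| = p.
  by rewrite -divgS ?(subset_trans sAH sHB) // oB mulnK ?cardG_gt0.
have := Lagrange_index sHB sAH; rewrite iBA => hp.
have : #|H : A| %| p by rewrite -hp dvdn_mull.
case/primeP: pr => _ h /h /orP [/eqP h1|/eqP h2].
  by left; apply/esym/index1g.
right; apply/index1g => //.
move: hp; rewrite h2 -{2}(mul1n p) => /eqP; rewrite eqn_mul2r.
by rewrite eqn0Ngt prime_gt0 //= => /eqP.
Qed.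

Lemma mid (H : {group gT}) : D \subset H -> (exists2 h, h \in H & h \notin D) ->
  (exists g, g \notin H) -> #|H| = (p ^ 2)%N.
Proof.
move=> sDH [h hH hD] [g gH].
have : #|H| %| p ^ 3 by rewrite -cardG cardSg ?subsetT.
move=> /(dvdn_pfactor _ _ pr) [m]; rewrite leq_eqVlt; case/orP.
  move/eqP => -> oH; case/negP: gH; suff -> : gval H = [set: gT] by rewrite inE.
  by apply/eqP; rewrite eqEcard subsetT /= cardG oH.
case: m => [|[|[|//]]] _ oH //.
- have := subset_leq_card sDH; rewrite oH cardD expn0 => h1.
  by have := prime_gt1 pr; rewrite ltnNge h1.
- case/negP: hD; suff -> : D = gval H by [].
  by apply/eqP; rewrite eqEcard sDH /= oH expn1 cardD.
Qed.

Lemma Dnorm : [set: gT] \subset 'N(D).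
Proof. by apply: normal_norm; rewrite /D -derg1; apply: der_normal. Qed.

Lemma decomp (H : {group gT}) (h : gT) : D \subset H -> #|H| = (p ^ 2)%N ->
  h \in H -> h \notin D -> forall l, l \in H -> exists i, exists2 d, d \in D & l = h ^+ i * d.
Proof.
move=> sDH oH hH hD l lH.
have s1 : (<[h]> <*> D)%G \subset H by rewrite join_subG cycle_subG hH sDH.
have o1 : #|H| = (p * #|DG|)%N by rewrite oH cardD.
have J : (<[h]> <*> D) :=: H.
  have [J|//] := @between DG (<[h]> <*> D)%G H (joing_subr _ _) s1 o1.
  case/negP: hD; rewrite -[D]J; apply: subsetP (joing_subl _ _) _ (cycle_id h).
have := lH; rewrite -J norm_joinEl; last exact: subset_trans (subsetT _) Dnorm.
case/mulsgP => a d /cycleP [i ->] dD ->; by exists i; exists d.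
Qed.

Lemma centE (g : gT) : g \notin D -> #|'C[g]| = (p ^ 2)%N.
Proof.
move=> gD; apply: mid.
- by apply/subsetP => d dD; apply/cent1P; apply: Dcent.
- by exists g; rewrite ?cent1id.
- have [h ch] := notD gD; exists h; apply: contra ch => /cent1P c.
  by apply/commgP; apply: commute_sym.
Qed.

Definition L := [set x : gT | ~~ nr_unit mul e x].
Hypothesis Lgrp : group_set L.
Canonical LG := Group Lgrp.

Lemma mule x : mul x e = x. Proof. by case: (mide x). Qed.
Lemma mulel x : mul e x = x. Proof. by case: (mide x). Qed.

Lemma unitP x : reflect (exists y, mul x y = e /\ mul y x = e) (nr_unit mul e x).
Proof.
apply: (iffP existsP) => [[y /andP [/eqP h1 /eqP h2]]|[y [h1 h2]]]; exists y.
  by split.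
by rewrite h1 h2 !eqxx.
Qed.

Lemma inj_unit x : injective (mul x) -> nr_unit mul e x.
Proof.
move=> ix; have [g gK Kg] := injF_bij ix.
apply/unitP; exists (g e); split; first by rewrite Kg.
apply: ix; rewrite massoc Kg mulel mule //.
Qed.

Lemma unit_inj x : nr_unit mul e x -> injective (mul x).
Proof.
case/unitP => y [_ h] a b hab.
by rewrite -(mulel a) -(mulel b) -h -!massoc hab.
Qed.

Lemma ker_inj x : (forall g, mul x g = 1 -> g = 1) -> injective (mul x).
Proof.
move=> h a b hab; apply/eqP; rewrite eq_mulgV1; apply/eqP; apply: h.
by rewrite mdistr mulV_ hab mulgV.
Qed.

Lemma killD x : ~~ nr_unit mul e x -> forall d, d \in D -> mul x d = 1.
Proof.
move=> nx d dD.
case: (boolP [exists g, (g != 1) && (mul x g == 1)]) => [/existsP [g /andP [g1 /eqP xg]]|].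
  have [d' [d'D d'1 xd']] : exists d', [/\ d' \in D, d' != 1 & mul x d' = 1].
    case: (boolP (g \in D)) => gD; first by exists g.
    have [h gh] := notD gD; exists [~ g, h]; split => //.
      by apply: mem_commg; rewrite inE.
    by rewrite mulR_ xg comm1g.
  move: dD; rewrite (Dcyc d'D d'1) => /cycleP [i ->].
  by rewrite mulX_ xd' expg1n.
rewrite negb_exists => /forallP h; case/negP: nx; apply: inj_unit; apply: ker_inj.
by move=> g xg; apply/eqP; move: (h g); rewrite xg eqxx andbT negbK.
Qed.

Lemma eD : e \notin D.
Proof.
apply/negP => eD.
have : [set: gT] \subset D by apply/subsetP => r _; rewrite -(mule r) mulD.
move/subset_leq_card; rewrite cardG cardD.
rewrite leqNgt -{1}(expn1 p) ltn_exp2l ?prime_gt1 //.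
Qed.

Lemma eL : e \notin L.
Proof. by rewrite inE negbK; apply/unitP; exists e; rewrite mule. Qed.

Lemma DL : D \subset L.
Proof.
apply/subsetP => d dD; rewrite inE; apply/negP => /unitP [v [_ h]].
by case/negP: eD; rewrite -h mulD.
Qed.

Lemma LrG r l : l \in L -> mul r l \in L.
Proof.
rewrite !inE; apply: contra => /unitP [v [_ h]].
apply: inj_unit => a b hab.
by rewrite -(mulel a) -(mulel b) -h -!massoc hab.
Qed.

Lemma LGr x y : x \in L -> mul x y \in L.
Proof.
rewrite !inE; apply: contra => /unitP [v [h _]].
rewrite -massoc in h; set s := mul y v in h.
have hs : injective (mul s).
  by move=> a b hab; rewrite -(mulel a) -(mulel b) -h -(massoc x s a) -(massoc x s b) hab.
have [g gK Kg] := injF_bij hs.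
apply: inj_unit => a b hab.
have ha : mul x a = g a by rewrite -{1}(Kg a) massoc h mulel.
have hb : mul x b = g b by rewrite -{1}(Kg b) massoc h mulel.
by rewrite -(Kg a) -(Kg b) -ha -hb hab.
Qed.

Lemma notL_unit x : x \notin L -> nr_unit mul e x.
Proof. by rewrite inE negbK. Qed.

Lemma tunit t : t \in D -> nr_unit mul e (t * e).
Proof.
move=> tD; apply: notL_unit; apply/negP => teL; case/negP: eL.
have tL : t \in LG by rewrite (subsetP DL).
by rewrite -(mulKg t e) groupM ?groupV.
Qed.

Lemma D_nt : exists2 d0, d0 \in D & d0 != 1.
Proof.
apply/trivgPn; rewrite trivg_card1 cardD; apply/eqP => p1.
by have := prime_gt1 pr; rewrite p1.
Qed.

Lemma DnL d : d \in D -> ~~ nr_unit mul e d.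
Proof. by move=> dD; have := subsetP DL d dD; rewrite inE. Qed.

Lemma EG t d : t \in D -> d \in D -> mul (t * e) d = d.
Proof.
have [d0 d0D d01] := D_nt.
pose F t := mul (t * e) d0.
have FD t' : t' \in D -> F t' \in D :\ 1.
  move=> t'D; rewrite !inE mulD // andbT.
  apply: contra d01 => /eqP h; apply/eqP; apply: (unit_inj (tunit t'D)).
  by rewrite mul1g_.
have [t1 [t2 [t1D t2D t12 Ft]]] : exists t1 t2, [/\ t1 \in D, t2 \in D, t1 != t2 & F t1 = F t2].
  case: (boolP [forall t1, forall t2,
     ((t1 \in D) && (t2 \in D) && (F t1 == F t2)) ==> (t1 == t2)]) => [/forallP hi|].
    have inj : {in D &, injective F}.
      by move=> a b aD bD hab; apply/eqP; move/forallP: (hi a) => /(_ b); rewrite aD bD hab eqxx.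
    have := card_in_imset inj; rewrite cardD => cI.
    have : [set F x | x in D] \subset D :\ 1.
      by apply/subsetP => y /imsetP [x xD ->]; apply: FD.
    move/subset_leq_card; rewrite cI.
    have := cardsD1 1 D; rewrite group1 cardD add1n => ->.
    by rewrite ltnn.
  rewrite negb_forall => /existsP [a]; rewrite negb_forall => /existsP [b].
  rewrite negb_imply => /andP [/andP [/andP [aD bD] /eqP hab] nab'].
  by exists a, b.
set u1 := t1 * e.
have iu1 := unit_inj (tunit t1D).
have [s sD hs] : exists2 s, s \in D & mul u1 s = t2 * t1^-1.
  have sI : [set mul u1 x | x in D] = D.
    apply/eqP; rewrite eqEcard card_in_imset; last by move=> a b _ _; apply: iu1.
    rewrite leqnn andbT; apply/subsetP => y /imsetP [x xD ->]; exact: mulD.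
  have : t2 * t1^-1 \in D by rewrite groupM ?groupV.
  by rewrite -{1}sI => /imsetP [x xD ->]; exists x.
have s1 : s != 1.
  apply: contra t12 => /eqP s1; move: hs; rewrite s1 mul1g_ => /eqP.
  by rewrite eq_sym -eq_mulgV1 eq_sym.
set w := s * e.
have hw : mul u1 w = t2 * e by rewrite /w mdistr hs mule /u1 mulgA mulgKV.
have wd0 : mul w d0 = d0.
  by apply: iu1; rewrite massoc hw; exact: (esym Ft).
have wD d' : d' \in D -> mul w d' = d'.
  by rewrite (Dcyc d0D d01) => /cycleP [i ->]; rewrite mulX_ wd0.
have ind k : forall d', d' \in D -> mul (s ^+ k * e) d' = d'.
  elim: k => [|k IH] d' d'D; first by rewrite expg0 mul1g mulel.
  have -> : s ^+ k.+1 * e = mul w (s ^+ k * e).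
    by rewrite mdistr wD ?groupX // mule /w expgSr mulgA.
  by rewrite -massoc IH // wD.
move=> tD dD; move: tD; rewrite (Dcyc sD s1) => /cycleP [k ->]; exact: ind.
Qed.

Lemma claimE t g : t \in D -> mul (t * e) g * g^-1 \in D.
Proof.
move=> tD; set u := t * e; set b := mul u g * g^-1.
have [d0 d0D d01] := D_nt.
have cR : [~ e, mul u g] = [~ e, g].
  have h1 : mul u [~ e, g] = [~ e, g] by apply: EG => //; apply: mem_commg; rewrite inE.
  rewrite -h1 mulR_ /u mule commMgJ.
  have /commgP/eqP -> : commute t (mul u g) by apply: Dcent.
  by rewrite conj1g mul1g.
have bC : b \in 'C[e].
  apply/cent1P; apply: commute_sym; apply/commgP/conjg_fixP.
  by rewrite /b conjgM (conjg_mulR e (mul u g)) cR -conjg_mulR conjgK.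
have eD' := eD.
have [i [d dD bE]] : exists i, exists2 d, d \in D & b = e ^+ i * d.
  apply: (@decomp 'C[e]%G) => //.
  - by apply/subsetP => d' d'D; apply/cent1P; apply: Dcent.
  - exact: centE.
  - exact: cent1id.
have h0 : mul d0 b = 1.
  rewrite /b mdistr mulV_ massoc /u mdistr mule (killD (DnL d0D) tD) mul1g.
  by rewrite mulgV.
move: h0; rewrite bE mdistr mulX_ mule (killD (DnL d0D) dD) mulg1 => /eqP.
rewrite -order_dvdn order_p // => pi.
have : e ^+ i == 1.
  rewrite -order_dvdn order_p //; apply: contra eD' => /eqP ->; exact: group1.
by move/eqP ->; rewrite mul1g.
Qed.

Definition S a b := [set y | mul a y * (mul b y)^-1 \in D].

Lemma Sgrp a b : group_set (S a b).
Proof.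
apply/group_setP; split; first by rewrite inE !mul1g_ mulgV group1.
move=> y1 y2; rewrite !inE => h1 h2.
rewrite !mdistr invMg.
have -> : mul a y1 * mul a y2 * ((mul b y2)^-1 * (mul b y1)^-1) =
   (mul a y1 * (mul b y1)^-1) * ((mul a y2 * (mul b y2)^-1) ^ (mul b y1)^-1).
  by rewrite conjgE invgK !mulgA mulgKV.
by rewrite groupM // memJ_norm // (subsetP Dnorm) ?inE.
Qed.
Canonical SG a b := Group (Sgrp a b).

Lemma S_all a b : #|L| = (p ^ 2)%N -> e \in S a b -> L \subset S a b ->
  forall y, y \in S a b.
Proof.
move=> oL eS sLS y.
have o : #|[set: gT]%G| = (p * #|LG|)%N by rewrite /= cardG oL -expnS.
have [J|J] := @between LG (SG a b) [set: gT]%G sLS (subsetT _) o.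
  by case/negP: eL; rewrite -[L]J.
by rewrite [S a b]J inE.
Qed.

Lemma A_of a l1 : #|L| = (p ^ 2)%N -> a \in L -> l1 \in L -> mul a l1 \notin D ->
  forall r l, l \in L -> mul r l * l^-1 \in D.
Proof.
move=> oL aL l1L hD.
set h := mul a l1.
have hL : h \in LG by apply: LGr.
have [k [d dD ak]] : exists k, exists2 d, d \in D & a^-1 = h ^+ k * d.
  by apply: (@decomp LG) => //; rewrite ?DL ?groupV.
set g := l1 ^+ k.
have gL : g \in LG by rewrite groupX.
have ag : mul a g = h ^+ k by rewrite mulX_.
set w := e * g.
have wu : nr_unit mul e w.
  apply: notL_unit; apply/negP => wL; case/negP: eL.
  by rewrite -(mulgK g e) groupM ?groupV.
have [w' [ww' _]] := unitP _ wu.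
set d1 := mul a w.
have d1E : d1 = d^-1.
  by rewrite /d1 /w mdistr mule ag -(mulgK d (h ^+ k)) -ak mulKVg.
have d1D : d1 \in D by rewrite d1E groupV.
set l' := mul w' l1.
have l'L : l' \in L by apply: LrG.
have d1l' : mul d1 l' = h.
  by rewrite /d1 /l' massoc -(massoc a w w') ww' mule.
have inj g' : g' \in L -> g' \notin D -> mul d1 g' \notin D.
  move=> g'L g'D; apply/negP => dg'.
  have [j [c cD l'E]] : exists j, exists2 c, c \in D & l' = g' ^+ j * c.
    by apply: (@decomp LG) => //; rewrite DL.
  case/negP: hD; rewrite -/h -d1l' l'E mdistr mulX_ (killD (DnL d1D) cD) mulg1.
  by rewrite groupX.
set q := mul d1 h.
have qD : q \notin D by apply: inj.
have qL : q \in LG by apply: LrG.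
have qE : q = mul 1 l' by rewrite /q -d1l' massoc (killD (DnL d1D) d1D).
have rq r : mul r q = q by rewrite qE massoc mul1g_.
move=> r l lL.
have [j [c cD lE]] : exists j, exists2 c, c \in D & l = q ^+ j * c.
  by apply: (@decomp LG) => //; rewrite DL.
rewrite lE mdistr mulX_ rq invMg.
have -> : q ^+ j * mul r c * (c^-1 * (q ^+ j)^-1) = (mul r c * c^-1) ^ (q ^+ j)^-1.
  by rewrite conjgE invgK !mulgA.
by rewrite memJ_norm ?(subsetP Dnorm) ?inE // groupM ?groupV ?mulD.
Qed.

Lemma nonunit_case x z y : x \in L -> z \in D -> mul (z * x) y * (mul x y)^-1 \in D.
Proof.
move=> xL zD.
have zxL : z * x \in LG by rewrite groupM // (subsetP DL).
case: (boolP [exists h, (h \in L) && (h \notin D)]) => [/existsP [h0 /andP [h0L h0D]]|].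
  have oL : #|LG| = (p ^ 2)%N.
    apply: mid; first exact: DL.
      by exists h0.
    by exists e; apply: eL.
  have : y \in S (z * x) x; last by rewrite inE.
  apply: S_all => //.
    by rewrite inE !mule mulgK.
  apply/subsetP => l lL; rewrite inE.
  case: (boolP [exists a, exists b, [&& a \in L, b \in L & mul a b \notin D]]).
    case/existsP => a /existsP [b /and3P [aL bL abD]].
    have := A_of oL aL bL abD.
    move=> hA; have h1 := hA (z * x) l lL; have h2 := hA x l lL.
    have -> : mul (z * x) l * (mul x l)^-1 = (mul (z * x) l * l^-1) * (mul x l * l^-1)^-1.
      by rewrite invMg invgK !mulgA mulgKV.
    by rewrite groupM ?groupV.
  rewrite negb_exists => /forallP hB.
  have hB' a b : a \in L -> b \in L -> mul a b \in D.
    move=> aL bL; move: (hB a); rewrite negb_exists => /forallP /(_ b).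
    by rewrite aL bL /= negbK.
  by rewrite groupM ?groupV ?hB'.
rewrite negb_exists => /forallP hn.
have LD u : u \in L -> u \in D by move=> uL; move: (hn u); rewrite uL /= negbK.
by rewrite groupM ?groupV ?LD ?LGr.
Qed.

Lemma main x z y : z \in D -> mul (z * x) y * (mul x y)^-1 \in D.
Proof.
move=> zD.
case: (boolP (nr_unit mul e x)) => xu; last first.
  by apply: nonunit_case; rewrite // inE.
have [x' [xx' x'x]] := unitP _ xu.
set z' := mul x' z.
have -> : z * x = mul x (z' * e) by rewrite mdistr massoc xx' mulel mule.
by rewrite -massoc -mulV_ -mdistr mulD // claimE // mulD.
Qed.

End NR.

Unset Implicit Arguments. Set Strict Implicit.

Theorem lemma7 (p : nat) (gT : finGroupType) (mul : gT -> gT -> gT) :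
  prime p -> odd p ->
  local_nearring mul ->
  #|[set: gT]| = (p ^ 3)%N ->
  ~~ abelian [set: gT] ->
  exponent [set: gT] = p ->
  nr_ideal mul [~: [set: gT], [set: gT]].
Proof.
move=> pr _ [[massoc mdistr] [e [mide Lgrp]]] cardG nab expG.
split.
- exact: groupP.
- by rewrite -derg1; apply: der_normal.
- by move=> x z zD; apply: (mulD mdistr).
- by move=> x y z zD; apply: (main pr massoc mdistr mide cardG nab expG Lgrp).
Qed.
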